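(* Let $\kappa$ be an uncountable regular cardinal and $\mu$ a cardinal with $\mu=\mu^{<\kappa}<2^\kappa$. Assume that every subset of ${}^\kappa\kappa$ of cardinality $\mu$ is a $\mathbf{\Sigma}^1_1$-subset. Then every continuous image of a closed subset of ${}^\kappa\mu$ (i.e. every set of the form $\mathrm{ran}(f)$ where $A\subseteq{}^\kappa\mu$ is closed and $f:A\to{}^\kappa\kappa$ is continuous) is a $\mathbf{\Sigma}^1_1$-subset of ${}^\kappa\kappa$.
   Context: For a cardinal $\nu$, ${}^\kappa\nu$ carries the topology with basic open sets $N_s=\{x\in{}^\kappa\nu : s\subseteq x\}$, $s$ a function from an ordinal below $\kappa$ to $\nu$. A subset of ${}^\kappa\kappa$ is $\mathbf{\Sigma}^1_1$ if it is the projection onto the first coordinate of a closed subset of ${}^\kappa\kappa\times{}^\kappa\kappa$. *)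

(* Defs.v *)
(* Generalized Baire spaces over a cardinal kappa, modelled by a
   type K carrying a strict well-order lt whose order type is an initial ordinal
   (elements of K = ordinals below kappa). A cardinal nu is modelled by a type N;
   the space ^kappa nu is the function type K -> N. *)
From Stdlib Require Import Classical FunctionalExtensionality.

Set Implicit Arguments.

Definition card_le (A B : Type) : Prop := exists f : A -> B, forall x y, f x = f y -> x = y.
Definition card_eq (A B : Type) : Prop :=
  exists f : A -> B, (forall x y, f x = f y -> x = y) /\ (forall y, exists x, f x = y).
Definition card_lt (A B : Type) : Prop := card_le A B /\ ~ card_le B A.

Record well_order (K : Type) (lt : K -> K -> bool) : Prop := {
  wo_irrefl : forall a, lt a a = false;
  wo_trans : forall a b c, lt a b = true -> lt b c = true -> lt a c = true;
  wo_total : forall a b, lt a b = true \/ a = b \/ lt b a = true;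
  wo_wf : well_founded (fun a b => lt a b = true) }.

Definition seg (K : Type) (lt : K -> K -> bool) (a : K) := {b : K | lt b a = true}.

(* the order type of (K,lt) is a cardinal: no ordinal below it has the same size *)
Definition is_initial (K : Type) (lt : K -> K -> bool) : Prop :=
  forall a : K, ~ card_le K (seg lt a).

Definition uncountable (K : Type) : Prop := ~ card_le K nat.

Definition regular (K : Type) (lt : K -> K -> bool) : Prop :=
  forall X : K -> Prop,
    (forall a, exists b, X b /\ (a = b \/ lt a b = true)) -> card_le K {b : K | X b}.

(* nu^{<kappa}: the set of all functions from an ordinal below kappa to nu *)
Definition seqs_below (K : Type) (lt : K -> K -> bool) (N : Type) :=
  {a : K & seg lt a -> N}.

Definition Nbhd (K : Type) (lt : K -> K -> bool) (N : Type) (a : K) (s : seg lt a -> N)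
  (x : K -> N) : Prop :=
  forall (b : K) (h : lt b a = true), x b = s (exist _ b h).

Definition is_open (K : Type) (lt : K -> K -> bool) (N : Type) (U : (K -> N) -> Prop) : Prop :=
  forall x, U x -> exists (a : K) (s : seg lt a -> N),
    Nbhd s x /\ forall y, Nbhd s y -> U y.

Definition is_closed (K : Type) (lt : K -> K -> bool) (N : Type) (C : (K -> N) -> Prop) : Prop :=
  is_open lt (fun x => ~ C x).

Definition is_open2 (K : Type) (lt : K -> K -> bool) (U : (K -> K) * (K -> K) -> Prop) : Prop :=
  forall p, U p -> exists (a1 : K) (s : seg lt a1 -> K) (a2 : K) (t : seg lt a2 -> K),
    Nbhd s (fst p) /\ Nbhd t (snd p) /\
    forall q, Nbhd s (fst q) -> Nbhd t (snd q) -> U q.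

Definition is_closed2 (K : Type) (lt : K -> K -> bool) (C : (K -> K) * (K -> K) -> Prop) : Prop :=
  is_open2 lt (fun p => ~ C p).

Definition sigma11 (K : Type) (lt : K -> K -> bool) (X : (K -> K) -> Prop) : Prop :=
  exists C, is_closed2 lt C /\ forall x, X x <-> exists y, C (x, y).

Definition continuous_on (K : Type) (lt : K -> K -> bool) (N : Type)
  (A : (K -> N) -> Prop) (f : {x : K -> N | A x} -> (K -> K)) : Prop :=
  forall U : (K -> K) -> Prop, is_open lt U ->
    exists V : (K -> N) -> Prop, is_open lt V /\
      forall (x : K -> N) (h : A x), U (f (exist _ x h)) <-> V x.

Definition range (A B : Type) (f : A -> B) : B -> Prop := fun y => exists z, f z = y.

(* Main.v *)
Require Import Defs.
From Stdlib Require Import Classical ClassicalEpsilon FunctionalExtensionality ProofIrrelevance Eqdep.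

Lemma sig_ext {A : Type} {P : A -> Prop} (u v : {x : A | P x}) :
  proj1_sig u = proj1_sig v -> u = v.
Proof. destruct u, v; simpl; intros; subst; f_equal; apply proof_irrelevance. Qed.

Definition restr {K N : Type} {lt : K -> K -> bool} (z : K -> N) (a : K) : seg lt a -> N :=
  fun i => z (proj1_sig i).

Lemma nbhd_restr {K N} (lt : K -> K -> bool) (z z' : K -> N) a :
  Nbhd (restr (lt:=lt) z a) z' <-> forall b, lt b a = true -> z' b = z b.
Proof. unfold Nbhd, restr; simpl; split; intros H b h; first [apply H; exact h | symmetry; apply H; exact h]. Qed.

Lemma nomax {K} {lt : K -> K -> bool} (Hwo : well_order lt) (Hunc : uncountable K)
  (Hreg : regular lt) : forall a, exists b, lt a b = true.
Proof.
  intros a. apply NNPP; intro H.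
  assert (Hc: forall b, exists c, c = a /\ (b = c \/ lt b c = true)).
  { intro b. exists a. split; auto. destruct (wo_total Hwo b a) as [h|[h|h]]; auto.
    exfalso; apply H; eauto. }
  destruct (Hreg (fun c => c = a) Hc) as [g Hg]. apply Hunc. exists (fun _ => 0).
  intros x y _. apply Hg.
  apply sig_ext. destruct (g x) as [u hu], (g y) as [v hv]; simpl; congruence.
Qed.

Lemma bounded {K} {lt : K -> K -> bool} (Hwo : well_order lt) (Hcard : is_initial lt)
  (Hreg : regular lt) a (g : seg lt a -> K) : exists b, forall i, lt (g i) b = true.
Proof.
  apply NNPP; intro H.
  assert (Hc: forall b, exists c, (exists i, g i = c) /\ (b = c \/ lt b c = true)).
  { intro b. apply NNPP; intro H2. apply H. exists b. intro i.
    destruct (wo_total Hwo (g i) b) as [h|[h|h]]; auto; exfalso; apply H2; exists (g i); split; eauto. }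
  destruct (Hreg _ Hc) as [h Hh]. apply (Hcard a).
  assert (HC: forall k, {i : seg lt a | g i = proj1_sig (h k)}).
  { intro k. apply constructive_indefinite_description. exact (proj2_sig (h k)). }
  exists (fun k => proj1_sig (HC k)).
  intros x y E. apply Hh. apply sig_ext.
  rewrite <- (proj2_sig (HC x)), <- (proj2_sig (HC y)), E. reflexivity.
Qed.

Lemma not_inj_sq {K} {lt : K -> K -> bool} (Hwo : well_order lt) (Hcard : is_initial lt)
  (Hreg : regular lt) c : ~ card_le K (seg lt c * seg lt c).
Proof.
  intros [g Hg].
  assert (Hb: forall al : seg lt c, exists b, forall k, fst (g k) = al -> lt k b = true).
  { intro al. apply NNPP; intro H.
    assert (Hc: forall b, exists k, fst (g k) = al /\ (b = k \/ lt b k = true)).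
    { intro b. apply NNPP; intro H2. apply H. exists b. intros k Hk.
      destruct (wo_total Hwo k b) as [h|[h|h]]; auto; exfalso; apply H2; exists k; split; eauto. }
    destruct (Hreg _ Hc) as [h Hh]. apply (Hcard c).
    exists (fun k => snd (g (proj1_sig (h k)))).
    intros x y E. apply Hh. apply sig_ext. apply Hg.
    destruct (h x) as [u hu], (h y) as [v hv]; simpl in *.
    destruct (g u) as [u1 u2] eqn:Eu, (g v) as [v1 v2] eqn:Ev; simpl in *. subst; reflexivity. }
  assert (Hb2: forall al : seg lt c, {b | forall k, fst (g k) = al -> lt k b = true}).
  { intro al. apply constructive_indefinite_description. apply Hb. }
  destruct (bounded Hwo Hcard Hreg c (fun al => proj1_sig (Hb2 al))) as [b Hbb].
  pose proof (proj2_sig (Hb2 (fst (g b))) b eq_refl) as H1.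
  pose proof (Hbb (fst (g b))) as H2.
  pose proof (wo_trans Hwo _ _ _ H1 H2). rewrite (wo_irrefl Hwo) in H. discriminate.
Qed.

Definition mx {K} (lt : K -> K -> bool) (a b : K) := if lt a b then b else a.
Definition le {K} (lt : K -> K -> bool) (a b : K) := a = b \/ lt a b = true.

Lemma mx_l {K} {lt : K -> K -> bool} (Hwo : well_order lt) a b : le lt a (mx lt a b).
Proof. unfold le, mx. destruct (lt a b) eqn:E; auto. Qed.
Lemma mx_r {K} {lt : K -> K -> bool} (Hwo : well_order lt) a b : le lt b (mx lt a b).
Proof. unfold le, mx. destruct (lt a b) eqn:E; auto.
  destruct (wo_total Hwo a b) as [h|[h|h]]; [congruence|auto|auto]. Qed.
Lemma lt_le {K} {lt : K -> K -> bool} (Hwo : well_order lt) a b c :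
  lt a b = true -> le lt b c -> lt a c = true.
Proof. intros H [->|H2]; auto. eapply wo_trans; eauto. Qed.
Lemma le_lt {K} {lt : K -> K -> bool} (Hwo : well_order lt) a b c :
  le lt a b -> lt b c = true -> lt a c = true.
Proof. intros [->|H2] H; auto. eapply wo_trans; eauto. Qed.
Lemma le_le {K} {lt : K -> K -> bool} (Hwo : well_order lt) a b c :
  le lt a b -> le lt b c -> le lt a c.
Proof. intros [->|H2] H; auto. right. eapply lt_le; eauto. Qed.

Definition Rg {K} (lt : K -> K -> bool) (p q : K * K) : Prop :=
  lt (mx lt (fst p) (snd p)) (mx lt (fst q) (snd q)) = true \/
  (mx lt (fst p) (snd p) = mx lt (fst q) (snd q) /\
   (lt (fst p) (fst q) = true \/ (fst p = fst q /\ lt (snd p) (snd q) = true))).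

Lemma Rg_wf {K} {lt : K -> K -> bool} (Hwo : well_order lt) : well_founded (Rg lt).
Proof.
  assert (H: forall m a b, mx lt a b = m -> Acc (Rg lt) (a, b)).
  { intro m. induction m as [m IHm] using (well_founded_ind (wo_wf Hwo)).
    intro a. induction a as [a IHa] using (well_founded_ind (wo_wf Hwo)).
    intro b. induction b as [b IHb] using (well_founded_ind (wo_wf Hwo)).
    intro Hm. constructor. intros [a' b'] Hr. unfold Rg in Hr; simpl in Hr.
    destruct Hr as [H1|[H2 [H3|[H4 H5]]]].
    - rewrite Hm in H1. eapply IHm; eauto.
    - eapply IHa; eauto. congruence.
    - subst a'. eapply IHb; eauto. congruence. }
  intros [a b]. eapply H; eauto.
Qed.

Lemma Rg_total {K} {lt : K -> K -> bool} (Hwo : well_order lt) p q :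
  p <> q -> Rg lt p q \/ Rg lt q p.
Proof.
  intro Hne. unfold Rg.
  destruct (wo_total Hwo (mx lt (fst p) (snd p)) (mx lt (fst q) (snd q))) as [h|[h|h]]; [tauto| |tauto].
  destruct (wo_total Hwo (fst p) (fst q)) as [h1|[h1|h1]]; [tauto| |right; right; split; auto].
  destruct (wo_total Hwo (snd p) (snd q)) as [h2|[h2|h2]]; [tauto| |right; right; split; auto].
  exfalso. apply Hne. destruct p, q; simpl in *; congruence.
Qed.

Lemma Rg_bound {K} {lt : K -> K -> bool} (Hwo : well_order lt) p q c :
  Rg lt q p -> lt (mx lt (fst p) (snd p)) c = true -> lt (fst q) c = true /\ lt (snd q) c = true.
Proof.
  intros Hr Hc.
  assert (Hq: lt (mx lt (fst q) (snd q)) c = true).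
  { destruct Hr as [H1|[H2 _]]. eapply wo_trans; eauto. rewrite H2; auto. }
  split; eapply le_lt; eauto; [apply mx_l|apply mx_r]; auto.
Qed.

Definition gstep {K} (lt : K -> K -> bool) (i : inhabited K) (p : K * K)
  (rec : forall q, Rg lt q p -> K) : K :=
  epsilon i (fun k => forall q (H : Rg lt q p), rec q H <> k).

Definition gpair {K} {lt : K -> K -> bool} (Hwo : well_order lt) (i : inhabited K) : K * K -> K :=
  Fix (Rg_wf Hwo) (fun _ => K) (gstep lt i).

Lemma gpair_eq {K} {lt : K -> K -> bool} (Hwo : well_order lt) (i : inhabited K) p :
  gpair Hwo i p = epsilon i (fun k => forall q, Rg lt q p -> gpair Hwo i q <> k).
Proof.
  unfold gpair. rewrite Fix_eq.
  - unfold gstep. reflexivity.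
  - intros x f g Hfg. assert (f = g).
    { apply functional_extensionality_dep; intro q; apply functional_extensionality_dep; intro H; apply Hfg. }
    subst; reflexivity.
Qed.

Lemma gpair_inj {K} {lt : K -> K -> bool} (Hwo : well_order lt) (Hcard : is_initial lt)
  (Hreg : regular lt) (Hunc : uncountable K) (i : inhabited K) :
  forall p q, gpair Hwo i p = gpair Hwo i q -> p = q.
Proof.
  assert (Hsp: forall p q, Rg lt q p -> gpair Hwo i q <> gpair Hwo i p).
  { intros p. rewrite (gpair_eq Hwo i p).
    apply epsilon_spec. apply NNPP; intro H.
    destruct (nomax Hwo Hunc Hreg (mx lt (fst p) (snd p))) as [c Hc].
    assert (H2: forall k, {q | Rg lt q p /\ gpair Hwo i q = k}).
    { intro k. apply constructive_indefinite_description. apply NNPP; intro H3. apply H.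
      exists k. intros q Hq E. apply H3; eauto. }
    apply (not_inj_sq Hwo Hcard Hreg c).
    exists (fun k => (exist (fun b => lt b c = true) (fst (proj1_sig (H2 k)))
                       (proj1 (Rg_bound Hwo _ _ _ (proj1 (proj2_sig (H2 k))) Hc)),
                     exist (fun b => lt b c = true) (snd (proj1_sig (H2 k)))
                       (proj2 (Rg_bound Hwo _ _ _ (proj1 (proj2_sig (H2 k))) Hc)))).
    intros x y E. injection E; intros E2 E1.
    rewrite <- (proj2 (proj2_sig (H2 x))), <- (proj2 (proj2_sig (H2 y))).
    f_equal. apply injective_projections; assumption. }
  intros p q E. apply NNPP; intro Hne.
  destruct (Rg_total Hwo p q Hne) as [h|h].
  - apply (Hsp q p h); auto.
  - apply (Hsp p q h); auto.
Qed.

Definition tag {K} (P : K * K -> K) (t : K) (z : K -> K) : K -> K := fun g => P (t, z g).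

Lemma tag_inj {K} (P : K * K -> K) (HP : forall p q, P p = P q -> p = q) t t' z z' :
  tag P t z = tag P t' z' -> t = t' /\ z = z'.
Proof.
  intro E. unfold tag in E.
  assert (H: forall g, (t, z g) = (t', z' g)).
  { intro g. apply HP. exact (equal_f E g). }
  split.
  - apply NNPP; intro Hn. apply Hn. 
    assert (Hg: exists g : K, True) by (exists t; auto). destruct Hg as [g _].
    specialize (H g). congruence.
  - apply functional_extensionality; intro g. specialize (H g). congruence.
Qed.

Lemma small_sigma {K} (lt : K -> K -> bool) (M : Type) (P : K * K -> K)
  (HP : forall p q, P p = P q -> p = q) (k0 k1 : K) (Hk : k0 <> k1)
  (e : M -> K -> K) (He : forall m m', e m = e m' -> m = m')
  (Hsub : forall X : (K -> K) -> Prop, card_eq M {x : K -> K | X x} -> sigma11 lt X)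
  (S : (K -> K) -> Prop) (j : {z | S z} -> M) (Hj : forall u v, j u = j v -> u = v) :
  sigma11 lt S.
Proof.
  set (S' := fun z' => (exists z, S z /\ z' = tag P k0 z) \/
                       (exists m, (~ exists s, j s = m) /\ z' = tag P k1 (e m))).
  set (F0 := fun m => match excluded_middle_informative (exists s, j s = m) with
                      | left H => tag P k0 (proj1_sig (proj1_sig (constructive_indefinite_description _ H)))
                      | right _ => tag P k1 (e m) end).
  assert (HF: forall m, (exists s, j s = m /\ F0 m = tag P k0 (proj1_sig s)) \/
                        ((~ exists s, j s = m) /\ F0 m = tag P k1 (e m))).
  { intro m. unfold F0. destruct (excluded_middle_informative (exists s, j s = m)) as [H|H].
    - left. destruct (constructive_indefinite_description _ H) as [s Hs]. simpl. eauto.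
    - right. auto. }
  assert (HS': forall m, S' (F0 m)).
  { intro m. destruct (HF m) as [[s [Hs E]]|[Hn E]]; rewrite E; unfold S'.
    - left. exists (proj1_sig s). split; auto. exact (proj2_sig s).
    - right. eauto. }
  assert (Hbij: card_eq M {x | S' x}).
  { exists (fun m => exist _ (F0 m) (HS' m)). split.
    - intros m m' E. apply (f_equal (@proj1_sig _ _)) in E. simpl in E.
      destruct (HF m) as [[s [Hs E1]]|[Hn E1]], (HF m') as [[s' [Hs' E1']]|[Hn' E1']];
        rewrite E1, E1' in E; apply tag_inj in E; auto; destruct E as [E2 E3].
      + subst. f_equal. apply sig_ext; auto.
      + congruence.
      + congruence.
      + auto.
    - intros [z' Hz']. 
      assert (Hz2: exists m, F0 m = z').
      { destruct Hz' as [[z [Hz E]]|[m [Hm E]]].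
        - exists (j (exist _ z Hz)). destruct (HF (j (exist _ z Hz))) as [[s [Hs E1]]|[Hn E1]].
          + apply Hj in Hs. subst. rewrite E1. reflexivity.
          + exfalso; apply Hn; eauto.
        - exists m. destruct (HF m) as [[s [Hs E1]]|[Hn E1]].
          + exfalso; apply Hm; eauto.
          + congruence. }
      destruct Hz2 as [m Hm]. exists m. apply sig_ext. simpl. auto. }
  destruct (Hsub S' Hbij) as [C [HC HCe]].
  exists (fun p => C (tag P k0 (fst p), snd p)). split.
  - intros [z v] Hn. simpl in Hn.
    destruct (HC (tag P k0 z, v) Hn) as [a1 [s [a2 [t [H1 [H2 H3]]]]]].
    exists a1, (restr z a1), a2, t. simpl in *. split; [|split]; auto.
    + apply nbhd_restr. auto.
    + intros [z' v'] Hq1 Hq2. simpl in *. apply H3; auto. simpl.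
      pose proof (proj1 (nbhd_restr lt z z' a1) Hq1) as Hq. intros b hb. rewrite <- (H1 b hb). unfold tag. rewrite Hq; auto.
  - intro z. split.
    + intro Hz. assert (H: S' (tag P k0 z)) by (left; eauto).
      apply HCe in H. destruct H as [v Hv]. exists v. auto.
    + intros [v Hv]. assert (H: S' (tag P k0 z)) by (apply HCe; eauto).
      destruct H as [[z2 [Hz2 E]]|[m [_ E]]].
      * apply tag_inj in E; auto. destruct E as [_ ->]; auto.
      * apply tag_inj in E; auto. destruct E; congruence.
Qed.

Definition Gc {K} (lt : K -> K -> bool) (P : K * K -> K) (unp : K -> K * K) (k0 : K)
  (xi : K) (c : K -> K -> K) (y : K -> K) : K -> K :=
  fun g => if lt (fst (unp g)) xi then P (xi, P (c (fst (unp g)) (snd (unp g)), y (fst (unp g))))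
           else P (xi, k0).

Lemma Gc_ext {K} (lt : K -> K -> bool) P unp (k0 : K) xi c c' y y' :
  (forall a, lt a xi = true -> c a = c' a /\ y a = y' a) ->
  Gc lt P unp k0 xi c y = Gc lt P unp k0 xi c' y'.
Proof.
  intro H. apply functional_extensionality; intro g. unfold Gc.
  destruct (lt (fst (unp g)) xi) eqn:E; auto.
  destruct (H _ E) as [E1 E2]. rewrite E1, E2. reflexivity.
Qed.

Lemma Gc_inv {K} (lt : K -> K -> bool) (P : K * K -> K) unp (k0 : K)
  (HP : forall p q, P p = P q -> p = q) (Hunp : forall p, unp (P p) = p) xi xi' c c' y y' :
  Gc lt P unp k0 xi c y = Gc lt P unp k0 xi' c' y' ->
  forall a, lt a xi = true -> c a = c' a /\ y a = y' a.
Proof.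
  intros E a ha.
  assert (Eb: forall b, Gc lt P unp k0 xi c y (P (a, b)) = Gc lt P unp k0 xi' c' y' (P (a, b)))
    by (intro b; rewrite E; reflexivity).
  unfold Gc in Eb. setoid_rewrite Hunp in Eb. simpl in Eb. rewrite ha in Eb.
  assert (Ex: xi = xi').
  { specialize (Eb k0). destruct (lt a xi'); apply HP in Eb; injection Eb; auto. }
  subst xi'. rewrite ha in Eb.
  assert (Hb: forall b, c a b = c' a b /\ y a = y' a).
  { intro b. specialize (Eb b). rewrite !Hunp in Eb; simpl in Eb. apply HP in Eb. injection Eb; intro E2.
    apply HP in E2. injection E2; intros; split; auto. }
  split.
  - apply functional_extensionality; intro b. apply Hb.
  - apply (Hb k0).
Qed.

Lemma code_exists {K} {lt : K -> K -> bool} (Hwo : well_order lt) (Hunc : uncountable K)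
  (Hreg : regular lt) M (Hmu : card_eq (seqs_below lt M) M) :
  exists code : K -> (K -> M) -> (K -> K) -> M,
    forall xi x y xi' x' y', code xi x y = code xi' x' y' ->
      xi = xi' /\ forall i, lt i xi = true -> x i = x' i /\ y i = y' i.
Proof.
  destruct Hmu as [hm [Hhm _]].
  assert (Hmin: exists a, forall b, lt b a <> true).
  { apply NNPP; intro H. apply Hunc. exists (fun _ => 0). intros x y0 _. exfalso. clear y0.
    induction x as [a IH] using (well_founded_ind (wo_wf Hwo)).
    apply H. exists a. intros b hb. exact (IH b hb). }
  destruct Hmin as [amin Hamin].
  set (m0 := hm (existT (fun a => seg lt a -> M) amin
                   (fun s => False_rect M (Hamin (proj1_sig s) (proj2_sig s))))).
  set (kM := fun k => hm (existT (fun a => seg lt a -> M) k (fun _ => m0))).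
  assert (HkM: forall k k', kM k = kM k' -> k = k').
  { intros k k' E. apply Hhm in E. exact (f_equal (@projT1 _ _) E). }
  destruct (nomax Hwo Hunc Hreg amin) as [b1 Hb1].
  destruct (nomax Hwo Hunc Hreg b1) as [c Hc].
  set (pMM := fun m1 m2 => hm (existT (fun a => seg lt a -> M) c
                 (fun i => if lt (proj1_sig i) b1 then m1 else m2))).
  assert (HpMM: forall m1 m2 m1' m2', pMM m1 m2 = pMM m1' m2' -> m1 = m1' /\ m2 = m2').
  { intros m1 m2 m1' m2' E. apply Hhm in E. apply inj_pair2 in E. split.
    - pose proof (equal_f E (exist _ amin (wo_trans Hwo _ _ _ Hb1 Hc))) as E1. simpl in E1.
      rewrite Hb1 in E1. exact E1.
    - pose proof (equal_f E (exist _ b1 Hc)) as E1. simpl in E1.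
      rewrite (wo_irrefl Hwo) in E1. exact E1. }
  exists (fun xi x y => hm (existT (fun a => seg lt a -> M) xi
            (fun i => pMM (x (proj1_sig i)) (kM (y (proj1_sig i)))))).
  intros xi x y xi' x' y' E. apply Hhm in E.
  assert (Exi: xi = xi') by exact (f_equal (@projT1 _ _) E).
  subst xi'. apply inj_pair2 in E. split; auto.
  intros i hi. pose proof (equal_f E (exist _ i hi)) as E1. simpl in E1.
  apply HpMM in E1. destruct E1 as [E1 E2]. split; auto.
Qed.

Theorem proposition1p20 (K : Type) (lt : K -> K -> bool) (M : Type)
  (Hwo : well_order lt) (Hcard : is_initial lt) (Hunc : uncountable K)
  (Hreg : regular lt)
  (Hmu : card_eq (seqs_below lt M) M)
  (Hmu2 : card_lt M (K -> bool))
  (Hsub : forall X : (K -> K) -> Prop, card_eq M {x : K -> K | X x} -> sigma11 lt X)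
  (A : (K -> M) -> Prop) (HA : is_closed lt A)
  (f : {x : K -> M | A x} -> (K -> K)) (Hf : continuous_on lt A f) :
  sigma11 lt (range f).
Proof.
  assert (iK : inhabited K).
  { apply NNPP; intro H. apply Hunc. exists (fun k => 0). intros x. exfalso; apply H; exact (inhabits x). }
  assert (iK' := iK). destruct iK' as [k0].
  destruct (nomax Hwo Hunc Hreg k0) as [k1 Hk01].
  assert (Hk : k0 <> k1) by (intro E; rewrite E, (wo_irrefl Hwo) in Hk01; discriminate).
  set (P := gpair Hwo iK).
  assert (HP : forall p q, P p = P q -> p = q) by apply (gpair_inj Hwo Hcard Hreg Hunc iK).
  set (unp := fun g => epsilon (inhabits (k0,k0)) (fun p => P p = g)).
  assert (Hunp : forall p, unp (P p) = p).
  { intro p. apply HP. unfold unp. apply (epsilon_spec (inhabits (k0,k0)) (fun q => P q = P p)). eauto. }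
  destruct (proj1 Hmu2) as [g Hg].
  set (e := fun m k => if g m k then k1 else k0).
  assert (He: forall m m', e m = e m' -> m = m').
  { intros m m' E. apply Hg. apply functional_extensionality; intro k. pose proof (equal_f E k) as Ek.
    unfold e in Ek. destruct (g m k), (g m' k); congruence. }
  destruct (code_exists Hwo Hunc Hreg M Hmu) as [code Hcode].
  set (col := fun (W : K -> K) a b => fst (unp (W (P (a, b))))).
  set (wit := fun (W : K -> K) a b => snd (unp (W (P (a, b))))).
  set (G := Gc lt P unp k0).
  set (S := fun z => exists t : K * {x : K -> M | A x},
              z = G (fst t) (fun a => e (proj1_sig (snd t) a)) (f (snd t))).
  assert (HS: sigma11 lt S).
  { apply (small_sigma lt M P HP k0 k1 Hk e He Hsub S
      (fun z => let t := proj1_sig (constructive_indefinite_description _ (proj2_sig z)) in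
                code (fst t) (proj1_sig (snd t)) (f (snd t)))).
    intros u v E. simpl in E.
    destruct (constructive_indefinite_description _ (proj2_sig u)) as [tu Hu].
    destruct (constructive_indefinite_description _ (proj2_sig v)) as [tv Hv]. simpl in E.
    apply Hcode in E. destruct E as [E1 E2]. apply sig_ext. rewrite Hu, Hv, E1.
    apply Gc_ext. intros a ha. rewrite <- E1 in ha. destruct (E2 a ha) as [E3 E4].
    rewrite E3, E4. auto. }
  destruct HS as [CS [HCS HCSe]].
  exists (fun p => forall xi, CS (G xi (col (snd p)) (fst p), wit (snd p) xi)).
  split.
  - intros [y W] Hn. simpl in Hn.
    apply not_all_ex_not in Hn. destruct Hn as [xi Hxi].
    destruct (HCS _ Hxi) as [a1 [s [a2 [t [H1 [H2 H3]]]]]]. simpl in H1, H2.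
    destruct (bounded Hwo Hcard Hreg a1 (fun i => fst (unp (proj1_sig i)))) as [b1 Hb1].
    destruct (bounded Hwo Hcard Hreg a1 (fun i => P (unp (proj1_sig i)))) as [b2 Hb2].
    destruct (bounded Hwo Hcard Hreg a2 (fun i => P (xi, proj1_sig i))) as [b3 Hb3].
    exists b1, (restr y b1), (mx lt b2 b3), (restr W (mx lt b2 b3)). simpl.
    split; [apply nbhd_restr; auto|split; [apply nbhd_restr; auto|]].
    intros [y' W'] Hy' HW'. simpl in *.
    pose proof (proj1 (nbhd_restr lt _ _ _) Hy') as Ey.
    pose proof (proj1 (nbhd_restr lt _ _ _) HW') as EW.
    intro Hc. apply (H3 (G xi (col W') y', wit W' xi)); simpl; [| |exact (Hc xi)].
    + intros c hc. rewrite <- (H1 c hc). unfold G, Gc, col.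
      rewrite (Ey _ (Hb1 (exist (fun b => lt b a1 = true) c hc) : lt (fst (unp c)) b1 = true)).
      rewrite <- (surjective_pairing (unp c)).
      rewrite (EW (P (unp c)) (lt_le Hwo _ _ _ (Hb2 (exist _ c hc)) (mx_l Hwo b2 b3))). reflexivity.
    + intros c hc. rewrite <- (H2 c hc). unfold wit.
      rewrite (EW (P (xi, c)) (lt_le Hwo _ _ _ (Hb3 (exist _ c hc)) (mx_r Hwo b2 b3))). reflexivity.
  - intro y. split.
    + intros [u Hu].
      assert (Hv: forall xi, {v | CS (G xi (fun a => e (proj1_sig u a)) y, v)}).
      { intro xi. apply constructive_indefinite_description. apply HCSe. exists (xi, u).
        simpl. rewrite Hu. reflexivity. }
      set (W := fun g => P (e (proj1_sig u (fst (unp g))) (snd (unp g)),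
                            proj1_sig (Hv (fst (unp g))) (snd (unp g)))).
      exists W. intro xi. simpl.
      assert (Ec: col W = fun a => e (proj1_sig u a)).
      { apply functional_extensionality; intro a; apply functional_extensionality; intro b.
        unfold col, W. rewrite !Hunp. simpl. try rewrite Hunp. reflexivity. }
      assert (Ew: wit W xi = proj1_sig (Hv xi)).
      { apply functional_extensionality; intro b.
        unfold wit, W. rewrite !Hunp. simpl. try rewrite Hunp. reflexivity. }
      rewrite Ec, Ew. exact (proj2_sig (Hv xi)).
    + intros [W HW]. simpl in HW.
      assert (HSx: forall xi, exists t : K * {x | A x},
                 G xi (col W) y = G (fst t) (fun a => e (proj1_sig (snd t) a)) (f (snd t))).
      { intro xi. apply (proj2 (HCSe _)). eauto. }
      assert (Hagree: forall xi, exists u : {x | A x}, forall a, lt a xi = true ->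
                 col W a = e (proj1_sig u a) /\ y a = f u a).
      { intro xi. destruct (HSx xi) as [[xi' u] Et]. simpl in Et.
        pose proof (Gc_inv lt P unp k0 HP Hunp _ _ _ _ _ _ Et) as Et2. exists u. exact Et2. }
      assert (Hrng: forall a, exists m, e m = col W a).
      { intro a. destruct (nomax Hwo Hunc Hreg a) as [xi Hxi]. destruct (Hagree xi) as [u Hu].
        exists (proj1_sig u a). symmetry. apply (Hu a Hxi). }
      assert (iM : inhabited M) by (destruct (Hrng k0) as [m _]; exact (inhabits m)).
      set (xW := fun a => epsilon iM (fun m => e m = col W a)).
      assert (HxW: forall a, e (xW a) = col W a)
        by (intro a; apply (epsilon_spec iM (fun m => e m = col W a)); auto).
      assert (Hagree2: forall xi, exists u : {x | A x}, forall a, lt a xi = true ->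
                 proj1_sig u a = xW a /\ f u a = y a).
      { intro xi. destruct (Hagree xi) as [u Hu]. exists u. intros a ha.
        destruct (Hu a ha) as [E1 E2]. split; auto. apply He. rewrite HxW. auto. }
      assert (HAx: A xW).
      { apply NNPP; intro Hn. destruct (HA xW Hn) as [a [s [Hs1 Hs2]]].
        destruct (Hagree2 a) as [u Hu].
        apply (Hs2 (proj1_sig u)); [|exact (proj2_sig u)].
        intros b hb. rewrite (proj1 (Hu b hb)). apply Hs1. }
      exists (exist _ xW HAx). apply functional_extensionality; intro eta.
      set (U := fun z : K -> K => z eta = f (exist _ xW HAx) eta).
      assert (HU: is_open lt U).
      { intros z Hz. destruct (nomax Hwo Hunc Hreg eta) as [a Ha]. exists a, (restr z a).
        split. apply nbhd_restr; auto.
        intros z' Hz'. unfold U. rewrite <- Hz. apply (proj1 (nbhd_restr lt z z' a) Hz'). exact Ha. }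
      destruct (Hf U HU) as [V [HV HVe]].
      assert (HVx: V xW) by (apply (HVe xW HAx); reflexivity).
      destruct (HV xW HVx) as [a [s [Hs1 Hs2]]].
      destruct (nomax Hwo Hunc Hreg eta) as [b Hb].
      destruct (Hagree2 (mx lt a b)) as [u Hu].
      assert (Hua: Nbhd s (proj1_sig u)).
      { intros c hc. rewrite (proj1 (Hu c (lt_le Hwo _ _ _ hc (mx_l Hwo a b)))). apply Hs1. }
      pose proof (Hs2 _ Hua) as HVu.
      pose proof (proj2 (Hu eta (lt_le Hwo _ _ _ Hb (mx_r Hwo a b)))) as Hy.
      destruct u as [xu hu]. simpl in *.
      apply (HVe xu hu) in HVu. unfold U in HVu. rewrite <- Hy. symmetry. exact HVu.
Qed.
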